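(* Let $D$ be a data set, $\mathcal{I}$ a finite index set, and for each $i\in\mathcal{I}$ let $D_{P_i}\subseteq D$ (population subset) and $D_{G_i}\subseteq D_{P_i}$ (group subset) be given. Let $h(z)$ be a real-valued function of a data point, and write $\mu(S)=\frac{1}{|S|}\sum_{z\in S}h(z)$. For $C_d>0$ let $\bar\mu^{C_d}(D_{G_i})=\frac{1}{|D_{G_i}|}\sum_{z\in D_{G_i}}\frac{h(z)}{\max(1,|h(z)|/C_d)}$. For $i\in\mathcal{I}$ let $V_i=|\mu(D_{P_i})-\mu(D_{G_i})|$ and $$\tilde V_i=|\mu(D_{P_i})-\bar\mu^{C_d}(D_{G_i})|+\mathcal{N}(0,\sigma_d^2\Delta_d^2),$$ where $\sigma_d>0$ and $\Delta_d=\frac{\sqrt2\,C_d}{\min_{j\in\mathcal{I}}|D_{G_j}|-1}$. Then for every $i\in\mathcal{I}$, $$\mathbb{E}\big[|V_i-\tilde V_i|\big]\le\frac{\sqrt2\,C_d\,\sigma_d}{\min_{j\in\mathcal{I}}|D_{G_j}|-1}+\frac{1}{|D_{G_i}|}\sum_{z\in D_{G_i}}\max\big(0,|h(z)|-C_d\big).$$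
   Context: The expectation is over the Gaussian noise. $V_i$ is the violation of the fairness constraint $\mu(D_{P_i})=\mu(D_{G_i})$ and $\tilde V_i$ its privacy-preserving (clipped and noised) version used in the dual update of the PF-LD algorithm. *)

(* Defs.v *)
From HB Require Import structures.
From mathcomp Require Import all_boot all_order all_algebra.
From mathcomp Require Import all_classical all_reals all_analysis.
Set Implicit Arguments. Unset Strict Implicit. Unset Printing Implicit Defensive.
Import Order.TTheory GRing.Theory Num.Theory.
Local Open Scope ring_scope.

Section Defs.
Context {R : realType} {T : finType}.

Definition mean (h : T -> R) (S : {set T}) : R :=
  (#|S|%:R)^-1 * \sum_(z in S) h z.

Definition clipped_mean (C : R) (h : T -> R) (S : {set T}) : R :=
  (#|S|%:R)^-1 * \sum_(z in S) h z / Num.max 1 (`|h z| / C).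

(* min_{j in I} |G_j| (the #|T| seed is harmless since G j ⊆ T) *)
Definition min_card {I : finType} (G : I -> {set T}) : nat :=
  \big[minn/#|T|]_(j : I) #|G j|.

Definition Delta {I : finType} (C : R) (G : I -> {set T}) : R :=
  Num.sqrt 2 * C / ((min_card G)%:R - 1).

Definition Vviol (h : T -> R) (P G : {set T}) : R :=
  `|mean h P - mean h G|.

(* tilde V_i, as a function of the realisation x of the Gaussian noise *)
Definition Vtilde (C : R) (h : T -> R) (P G : {set T}) (x : R) : R :=
  `|mean h P - clipped_mean C h G| + x.

End Defs.

(* Main.v *)
Require Import Defs.
From HB Require Import structures.
From mathcomp Require Import all_boot all_order all_algebra.
From mathcomp Require Import all_classical all_reals all_analysis.
From mathcomp Require Import lebesgue_measure measurable_realfun.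
Import Order.TTheory GRing.Theory Num.Theory.
From mathcomp Require Import ring lra.
Import numFieldTopology.Exports numFieldNormedType.Exports.
Local Open Scope ring_scope.

Section S.
Context {R : realType}.

Lemma normal_change (m s : R) (f : R -> \bar R) : (forall x, 0 <= f x)%E ->
  measurable_fun setT f ->
  (\int[normal_prob m s]_x (f x) =
  \int[@lebesgue_measure R]_x (f x * (normal_pdf m s x)%:E))%E.
Proof.
move=> f0 mf.
have numu := normal_prob_dominates m s.
rewrite -(Radon_Nikodym_SigmaFinite.change_of_variables numu f0 measurableT mf).
have mpdf : measurable_fun setT (fun x => (normal_pdf m s x)%:E).
  by apply/measurable_EFinP; exact: measurable_normal_pdf.
have mRN := measurable_int _ (Radon_Nikodym_SigmaFinite.f_integrable numu).
apply: ae_eq_integral => //.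
- exact: emeasurable_funM.
- exact: emeasurable_funM.
apply: ae_eqe_mul2l.
apply: integral_ae_eq => //.
  exact: Radon_Nikodym_SigmaFinite.f_integrable.
move=> E _ mE.
by rewrite -Radon_Nikodym_SigmaFinite.f_integral.
Qed.

Lemma abs_normal (s : R) : 0 < s ->
  (\int[normal_prob 0 s]_x (`|x|)%:E <= s%:E)%E.
Proof.
move=> s0; have sn0 : s != 0 by rewrite gt_eqF.
rewrite normal_change; last 2 first.
- by move=> x; rewrite lee_fin.
- by apply/measurable_EFinP; exact: normr_measurable.
pose f := fun x : R => `|x| * normal_pdf 0 s x : R.
have f0 x : 0 <= f x by rewrite mulr_ge0 ?normal_pdf_ge0.
have cf : continuous (f : R -> R).
  move=> x; apply: cvgM; first exact: norm_continuous.
  exact: continuous_normal_pdf.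
have fE x : f x = `|x| * (normal_peak s * expR (- (x - 0) ^+ 2 / (s ^+ 2 *+ 2))).
  by rewrite /f normal_pdfE.
have evenf : f =1 f \o -%R.
  by move=> x; rewrite /= !fE normrN !subr0 sqrrN.
under eq_integral do rewrite -EFinM.
rewrite (ge0_symfun_integralT f0 cf evenf).
pose k := (s ^+ 2 *+ 2)^-1.
pose c := normal_peak s * s ^+ 2.
pose F := (-c) \*: (expR \o ((-k) \*: ((@id R) ^+ 2))).
have dF (x : R) : is_derive x (1:R) F (-c * (expR (- k * x ^+ 2) * (- k * (x *+ 2)))).
  rewrite /F; apply: is_derive_eq.
  by rewrite /= !fctE -![_ *: _]/(_ * _) mulr1 expr1 mulr_natl.
have FE x : F x = - c * expR (- (x ^+ 2 * k)).
  by rewrite /F /= !fctE -![_ *: _]/(_ * _); congr (_ * expR _); rewrite mulNr mulrC.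
have k0 : 0 < k by rewrite invr_gt0 pmulrn_lgt0 // exprn_gt0.
set I := (\int[_]_(_ in _) _)%E.
have -> : I = (0%:E - (F 0)%:E)%E.
  rewrite /I -set_itvcy; apply: ge0_continuous_FTC2y.
- by move=> x _; exact: f0.
- exact: continuous_subspaceT.
- have -> : F = (fun x => - c * expR (- (x ^+ 2 * k))) by apply/funext => x; rewrite FE.
  rewrite -(mulr0 (-c)).
  apply: cvgMr.
  apply: (cvg_comp (fun x => x ^+ 2 * k) (fun y => expR (- y))); last exact: cvgr_expR.
  apply: gt0_cvgMly => //; exact: cvgr_expr2.
- by move=> x _; apply: ex_derive; exact: dF.
- apply: cvg_at_right_filter.
  apply/differentiable_continuous/derivable1_diffP.
  by apply: ex_derive; exact: dF.
- move=> x; rewrite in_itv /= andbT => x0.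
  rewrite derive1E derive_val fE gtr0_norm // subr0.
  have -> : - x ^+ 2 / (s ^+ 2 *+ 2) = - k * x ^+ 2 by rewrite /k !mulNr mulrC.
  set e := expR _.
  rewrite /c /k; field.
  by [].
rewrite -EFinB -EFinM lee_fin FE expr0n /= mul0r oppr0 expR0 mulr1 sub0r opprK.
rewrite /c /normal_peak -mulrnAr sqrtrM ?sqr_ge0 // sqrtr_sqr ger0_norm ?(ltW s0) //.
set q := Num.sqrt (pi *+ 2).
have q2 : 2 <= q.
  have -> : (2 : R) = Num.sqrt (2 ^+ 2) by rewrite sqrtr_sqr ger0_norm.
  rewrite /q ler_sqrt; last first.
    by rewrite mulrn_wge0 // pi_ge0.
  have := @pi_ge2 R; lra.
have q0 : 0 < q by apply: lt_le_trans q2.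
have -> : 2 * ((s * q)^-1 * s ^+ 2) = s * (2 / q).
  by field; rewrite gt_eqF.
by rewrite -[leRHS]mulr1 ler_pM2l // ler_pdivrMr // mul1r.
Qed.
End S.

Section Clip.
Context {R : realType}.

Lemma clip_pt (C y : R) : 0 < C ->
  `|y * (Num.max 1 (`|y| / C))^-1 - y| <= Num.max 0 (`|y| - C).
Proof.
move=> C0.
have [hle|hlt] := leP (`|y| / C) 1.
  by rewrite invr1 mulr1 subrr normr0 le_max lexx.
have y0 : `|y| != 0.
  apply/eqP => y0; move: hlt; rewrite y0 mul0r; lra.
have hC : C < `|y|.
  by move: hlt; rewrite ltr_pdivlMr // mul1r.
have -> : y * (`|y| / C)^-1 - y = y * (C / `|y| - 1).
  by field; rewrite y0 gt_eqF.
rewrite normrM (ler0_norm (x := C / `|y| - 1)); last first.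
  rewrite subr_le0 ler_pdivrMr; last by rewrite normr_gt0 -normr_eq0.
  by rewrite mul1r ltW.
rewrite opprB mulrBr mulr1 mulrCA divff // mulr1.
by rewrite le_max lexx orbT.
Qed.

End Clip.

Theorem theorem7 (R : realType) (T : finType) (I : finType)
  (D : {set T}) (P G : I -> {set T}) (h : T -> R) (Cd sigmad : R)
  (hP : forall i, P i \subset D) (hG : forall i, G i \subset P i)
  (hGcard : forall j, (1 < #|G j|)%N)
  (hC : 0 < Cd) (hsigma : 0 < sigmad) (i : I) :
  (\int[normal_prob 0 (sigmad * Delta Cd G)]_x
      (`|Vviol h (P i) (G i) - Vtilde Cd h (P i) (G i) x|)%:E
   <= (Num.sqrt 2 * Cd * sigmad / ((min_card G)%:R - 1)
       + (#|G i|%:R)^-1 * \sum_(z in G i) Num.max 0 (`|h z| - Cd))%:E)%E.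
Proof.
have m1 : (1 < min_card G)%N.
  rewrite /min_card; apply: (big_ind (fun n => 1 < n)%N).
  - exact: leq_trans (hGcard i) (max_card _).
  - by move=> x y hx hy; rewrite leq_min hx hy.
  - by move=> j _; exact: hGcard.
set m := min_card G in m1 *.
have mpos : 0 < m%:R - 1 :> R by rewrite subr_gt0 ltr1n.
set sd := sigmad * Delta Cd G.
have sd0 : 0 < sd.
  by rewrite /sd /Delta mulr_gt0 // divr_gt0 // mulr_gt0 // sqrtr_gt0.
have -> : Num.sqrt 2 * Cd * sigmad / (m%:R - 1) = sd.
  by rewrite /sd /Delta -/m; ring.
set K := `|mean h (G i) - clipped_mean Cd h (G i)|.
set B := (#|G i|%:R)^-1 * \sum_(z in G i) Num.max 0 (`|h z| - Cd).
have KB : K <= B.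
  rewrite /K /B /mean /clipped_mean -mulrBr normrM ger0_norm ?invr_ge0 //.
  rewrite ler_wpM2l ?invr_ge0 // -sumrB.
  apply: le_trans (ler_norm_sum _ _ _) _.
  apply: ler_sum => z _.
  by rewrite distrC; exact: clip_pt.
have pt x : `|Vviol h (P i) (G i) - Vtilde Cd h (P i) (G i) x| <= K + `|x|.
  rewrite /Vviol /Vtilde opprD addrA.
  apply: le_trans (ler_normB _ _) _.
  rewrite lerD2r.
  apply: le_trans (ler_dist_dist _ _) _.
  rewrite /K (_ : mean h (P i) - mean h (G i) - (mean h (P i) - clipped_mean Cd h (G i))
     = - (mean h (G i) - clipped_mean Cd h (G i))); last by ring.
  by rewrite normrN.
have mf : measurable_fun setT
    (fun x : R => (`|Vviol h (P i) (G i) - Vtilde Cd h (P i) (G i) x|)%:E).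
  apply/measurable_EFinP; apply: measurableT_comp => //.
  apply: measurable_funB => //; exact: measurable_funD.
apply: (@le_trans _ _ (\int[normal_prob 0 sd]_x ((K + `|x|)%:E))%E).
  apply: ge0_le_integral => //.
  - apply/measurable_EFinP; apply: measurableT_comp => //.
    rewrite (_ : +%R K = cst K \+ id) //; exact: measurable_funD.
  - by move=> x _; rewrite lee_fin pt.
under eq_integral do rewrite EFinD.
rewrite ge0_integralD //; try (by move=> x _; rewrite lee_fin);
  try (by apply/measurable_EFinP; exact: normr_measurable);
  try (by move=> x _; rewrite lee_fin /K).
have N1 : (normal_prob 0 sd setT = 1)%E by exact: probability_setT.
rewrite integral_cst // -[X in (K%:E * X)%E]/(normal_prob 0 sd setT) N1 mule1 EFinD addeC.
apply: leeD; first exact: abs_normal.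
by rewrite lee_fin.
Qed.
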